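(* Let $\nu>-1$ be real. Then $J_\nu(\cdot;q^2)$ has countably infinitely many positive zeros, and each of them is simple.
   Context: Fix $0<q<1$. For $a\in\mathbb C$ put $(a;q)_0=1$, $(a;q)_k=\prod_{i=0}^{k-1}(1-aq^i)$, $(a;q)_\infty=\prod_{i\ge0}(1-aq^i)$. For $\nu\in\mathbb C$ and $x\in\mathbb C\setminus\{0\}$ the Hahn–Exton $q$-Bessel function is $$J_\nu(x;q^2)=\frac{x^\nu}{(q^2;q^2)_\infty}\sum_{k=0}^\infty\frac{(-1)^kq^{k(k+1)}(q^{2\nu+2k+2};q^2)_\infty}{(q^2;q^2)_k}\,x^{2k},$$ with $x^\nu=\exp(\nu\operatorname{Log}x)$ (principal branch). A zero $a$ is simple if $J_\nu'(a;q^2)\ne0$ (ordinary derivative in $x$). *)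

(* Defs.v *)
From Stdlib Require Import Reals.
From Coquelicot Require Import Coquelicot.
Open Scope R_scope.

Fixpoint qpoch (a q : R) (k : nat) : R :=
  match k with
  | O => 1
  | S k' => qpoch a q k' * (1 - a * q ^ k')
  end.

Definition qpoch_inf (a q : R) : R := real (Lim_seq (fun k => qpoch a q k)).

(* Hahn--Exton q-Bessel function J_nu(x;q^2), for real nu and real x > 0
   (x^nu = exp(nu ln x) is the principal branch; q^(2nu+2k+2) = Rpower). *)
Definition HE_term (nu q x : R) (k : nat) : R :=
  (-1) ^ k * q ^ (k * (k + 1)) * qpoch_inf (Rpower q (2 * nu + 2 * INR k + 2)) (q ^ 2)
  / qpoch (q ^ 2) (q ^ 2) k * x ^ (2 * k).

Definition HE_J (nu q x : R) : R :=
  Rpower x nu / qpoch_inf (q ^ 2) (q ^ 2) * Series (HE_term nu q x).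

(* Main.v *)
Require Import Defs.
From Stdlib Require Import Reals.
From Coquelicot Require Import Coquelicot.
From Stdlib Require Import Lra Lia Psatz Arith Classical ClassicalEpsilon.
Open Scope R_scope.

Lemma pow_le1 (p : R) (k : nat) : 0 <= p <= 1 -> 0 <= p ^ k <= 1.
Proof.
  intros Hp. induction k as [|k IH]; simpl; [lra|]. nra.
Qed.

Lemma qpoch_shift a p k : qpoch a p (S k) = (1 - a) * qpoch (a * p) p k.
Proof.
  induction k as [|k IH].
  - simpl. ring.
  - change (qpoch a p (S (S k))) with (qpoch a p (S k) * (1 - a * p ^ (S k))).
    rewrite IH. simpl. ring.
Qed.

Lemma qpoch_split a p n k : qpoch a p (n + k) = qpoch a p n * qpoch (a * p ^ n) p k.
Proof.
  induction k as [|k IH].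
  - rewrite Nat.add_0_r. simpl. ring.
  - rewrite Nat.add_succ_r. simpl. rewrite IH. rewrite pow_add. ring.
Qed.

Lemma qpoch_bounds a p k : 0 <= a <= 1 -> 0 <= p <= 1 -> 0 <= qpoch a p k <= 1.
Proof.
  intros Ha Hp. induction k as [|k IH]; simpl; [lra|].
  pose proof (pow_le1 p k Hp).
  assert (0 <= a * p ^ k <= 1) by (split; nra).
  split; nra.
Qed.

Lemma qpoch_decr a p k : 0 <= a <= 1 -> 0 <= p <= 1 -> qpoch a p (S k) <= qpoch a p k.
Proof.
  intros Ha Hp. simpl. pose proof (qpoch_bounds a p k Ha Hp).
  pose proof (pow_le1 p k Hp).
  assert (0 <= a * p ^ k <= 1) by (split; nra). nra.
Qed.

Lemma qpoch_pos a p k : 0 <= a < 1 -> 0 <= p <= 1 -> 0 < qpoch a p k.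
Proof.
  intros Ha Hp. induction k as [|k IH]; simpl; [lra|].
  pose proof (pow_le1 p k Hp).
  assert (a * p ^ k <= a) by nra.
  apply Rmult_lt_0_compat; lra.
Qed.

Lemma qpoch_weier a p k : 0 <= a <= 1 -> 0 <= p < 1 ->
  1 - a * (1 - p ^ k) / (1 - p) <= qpoch a p k.
Proof.
  intros Ha Hp. induction k as [|k IH].
  - simpl. unfold Rdiv. rewrite Rminus_diag, Rmult_0_r, Rmult_0_l. lra.
  - assert (HS : a * (1 - p ^ S k) / (1 - p) = a * (1 - p ^ k) / (1 - p) + a * p ^ k).
    { simpl. field. lra. }
    rewrite HS. simpl.
    pose proof (pow_le1 p k ltac:(lra)).
    pose proof (qpoch_bounds a p k Ha ltac:(lra)).
    assert (HS0 : 0 <= a * (1 - p ^ k) / (1 - p)).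
    { apply Rmult_le_pos; [nra|]. apply Rlt_le, Rinv_0_lt_compat. lra. }
    set (S0 := a * (1 - p ^ k) / (1 - p)) in *.
    assert (Hf : 0 <= a * p ^ k <= 1) by (split; nra).
    assert (0 <= qpoch a p k * (1 - a * p ^ k)) by nra.
    destruct (Rle_dec (1 - S0) 0).
    + nra.
    + assert ((1 - S0) * (1 - a * p ^ k) <= qpoch a p k * (1 - a * p ^ k)) by nra.
      nra.
Qed.

Lemma qpoch_inf_spec a p : 0 <= a < 1 -> 0 < p < 1 ->
  is_lim_seq (fun k => qpoch a p k) (qpoch_inf a p) /\ 0 < qpoch_inf a p <= 1.
Proof.
  intros Ha Hp.
  assert (HN : exists N, a * p ^ N <= (1 - p) / 2).
  { destruct (pow_lt_1_zero p ltac:(rewrite Rabs_right; lra) ((1 - p) / 2) ltac:(lra)) as [N HN].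
    exists N. specialize (HN N (le_n N)). rewrite Rabs_right in HN.
    - nra.
    - apply Rle_ge, pow_le; lra. }
  destruct HN as [N HN].
  set (m := qpoch a p N / 2).
  assert (Hm : 0 < m) by (unfold m; pose proof (qpoch_pos a p N Ha ltac:(lra)); lra).
  assert (Hlb : forall n, m <= qpoch a p n).
  { intro n. destruct (Compare_dec.le_lt_dec n N) as [Hle|Hlt].
    - assert (forall d, qpoch a p (n + d) <= qpoch a p n).
      { induction d as [|d IH]. rewrite Nat.add_0_r; lra.
        rewrite Nat.add_succ_r. eapply Rle_trans; [apply qpoch_decr; lra|exact IH]. }
      replace N with (n + (N - n))%nat in Hm by lia.
      unfold m. replace N with (n + (N - n))%nat by lia.
      specialize (H (N - n)%nat). pose proof (qpoch_pos a p (n + (N - n)) Ha ltac:(lra)). lra.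
    - replace n with (N + (n - N))%nat by lia. rewrite qpoch_split.
      pose proof (qpoch_weier (a * p ^ N) p (n - N) ltac:(split; [apply Rmult_le_pos; [lra|apply pow_le; lra]|lra]) ltac:(lra)).
      pose proof (pow_le1 p (n - N) ltac:(lra)).
      assert (a * p ^ N * (1 - p ^ (n - N)) / (1 - p) <= 1 / 2).
      { apply (Rmult_le_reg_r (1 - p)); [lra|]. unfold Rdiv. rewrite Rmult_assoc, Rinv_l; [|lra].
        assert (0 <= a * p ^ N) by (apply Rmult_le_pos; [lra|apply pow_le; lra]). nra. }
      pose proof (qpoch_pos a p N Ha ltac:(lra)). unfold m. nra. }
  assert (Hex : ex_finite_lim_seq (fun k => qpoch a p k)).
  { apply ex_finite_lim_seq_decr with m.
    - intro n. apply qpoch_decr; lra.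
    - exact Hlb. }
  destruct Hex as [l Hl].
  assert (Hq : qpoch_inf a p = l).
  { unfold qpoch_inf. rewrite (is_lim_seq_unique _ _ Hl). reflexivity. }
  rewrite Hq. split; [exact Hl|]. split.
  - assert (Rbar_le m l).
    { apply (is_lim_seq_le (fun _ => m) (fun k => qpoch a p k)); auto. apply is_lim_seq_const. }
    simpl in H. lra.
  - assert (Rbar_le l 1).
    { apply (is_lim_seq_le (fun k => qpoch a p k) (fun _ => 1)); auto.
      intro n. apply qpoch_bounds; lra. apply is_lim_seq_const. }
    simpl in H. lra.
Qed.

Lemma qpoch_inf_shift a p : 0 <= a < 1 -> 0 < p < 1 ->
  qpoch_inf a p = (1 - a) * qpoch_inf (a * p) p.
Proof.
  intros Ha Hp.
  destruct (qpoch_inf_spec a p Ha Hp) as [H1 _].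
  destruct (qpoch_inf_spec (a * p) p ltac:(split; nra) Hp) as [H2 _].
  apply is_lim_seq_incr_1 in H1.
  apply (is_lim_seq_scal_l _ (1 - a)) in H2.
  assert (Heq : forall n, qpoch a p (S n) = (1 - a) * qpoch (a * p) p n) by (intro; apply qpoch_shift).
  apply (is_lim_seq_ext _ _ _ Heq) in H1.
  pose proof (is_lim_seq_unique _ _ H1). pose proof (is_lim_seq_unique _ _ H2).
  rewrite H in H0. simpl in H0. injection H0. auto.
Qed.

Definition rr nu q := Rpower q (2 * nu + 2).
Definition CC nu q k := qpoch_inf (Rpower q (2 * nu + 2 * INR k + 2)) (q ^ 2).
Definition cc nu q (k : nat) := (-1) ^ k * q ^ (k * (k + 1)) * CC nu q k / qpoch (q ^ 2) (q ^ 2) k.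

Lemma rr_bounds q nu : 0 < q < 1 -> -1 < nu -> 0 < rr nu q < 1.
Proof.
  intros Hq Hn. unfold rr, Rpower. split; [apply exp_pos|].
  rewrite <- exp_0. apply exp_increasing.
  assert (ln q < 0) by (rewrite <- ln_1; apply ln_increasing; lra).
  nra.
Qed.

Lemma Rpow_k q nu k : 0 < q -> Rpower q (2 * nu + 2 * INR k + 2) = rr nu q * (q ^ 2) ^ k.
Proof.
  intros Hq. unfold rr.
  replace (2 * nu + 2 * INR k + 2) with ((2 * nu + 2) + INR (2 * k)) by (rewrite mult_INR; simpl; ring).
  rewrite Rpower_plus, Rpower_pow by lra. rewrite pow_mult. reflexivity.
Qed.

Lemma p_bounds q : 0 < q < 1 -> 0 < q ^ 2 < 1.
Proof. intros. simpl. nra. Qed.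

Lemma CC_spec q nu k : 0 < q < 1 -> -1 < nu -> 0 < CC nu q k <= 1.
Proof.
  intros Hq Hn. unfold CC. rewrite Rpow_k by lra.
  pose proof (rr_bounds q nu Hq Hn). pose proof (p_bounds q Hq).
  pose proof (pow_le1 (q^2) k ltac:(lra)).
  apply qpoch_inf_spec; [split; nra|lra].
Qed.

Lemma CC_shift q nu k : 0 < q < 1 -> -1 < nu ->
  CC nu q k = (1 - rr nu q * (q ^ 2) ^ k) * CC nu q (S k).
Proof.
  intros Hq Hn. unfold CC. rewrite !Rpow_k by lra.
  pose proof (rr_bounds q nu Hq Hn). pose proof (p_bounds q Hq).
  pose proof (pow_le1 (q^2) k ltac:(lra)).
  rewrite qpoch_inf_shift; [|split; nra|lra].
  f_equal. f_equal. simpl. ring.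
Qed.

Lemma Q_pos q k : 0 < q < 1 -> 0 < qpoch (q ^ 2) (q ^ 2) k.
Proof. intros Hq. pose proof (p_bounds q Hq). apply qpoch_pos; lra. Qed.

Lemma cc_nz q nu k : 0 < q < 1 -> -1 < nu -> cc nu q k <> 0.
Proof.
  intros Hq Hn. unfold cc. pose proof (CC_spec q nu k Hq Hn). pose proof (Q_pos q k Hq).
  unfold Rdiv. apply Rmult_integral_contrapositive_currified; [|apply Rinv_neq_0_compat; lra].
  apply Rmult_integral_contrapositive_currified; [|lra].
  apply Rmult_integral_contrapositive_currified; apply pow_nonzero; lra.
Qed.

Lemma cc_rec q nu k : 0 < q < 1 -> -1 < nu ->
  cc nu q (S k) * (1 - (q ^ 2) ^ (S k)) * (1 - rr nu q * (q ^ 2) ^ k) = - (q ^ 2) ^ (S k) * cc nu q k.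
Proof.
  intros Hq Hn. unfold cc.
  rewrite (CC_shift q nu k Hq Hn).
  pose proof (Q_pos q k Hq). pose proof (p_bounds q Hq).
  assert (HQ : qpoch (q ^ 2) (q ^ 2) (S k) = qpoch (q ^ 2) (q ^ 2) k * (1 - (q ^ 2) ^ S k)) by (simpl; ring).
  rewrite HQ.
  assert (Hpow : q ^ (S k * (S k + 1)) = q ^ (k * (k + 1)) * (q ^ 2) ^ S k).
  { rewrite <- pow_mult, <- pow_add. f_equal. lia. }
  rewrite Hpow.
  assert (1 - (q ^ 2) ^ S k <> 0).
  { pose proof (pow_lt_1_compat (q^2) (S k) ltac:(lra) ltac:(lia)). lra. }
  simpl pow at 1. field. split; lra.
Qed.

Lemma cc_ratio q nu : 0 < q < 1 -> -1 < nu ->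
  is_lim_seq (fun n => Rabs (cc nu q (S n) / cc nu q n)) 0.
Proof.
  intros Hq Hn. set (p := q ^ 2). pose proof (p_bounds q Hq). fold p in H.
  pose proof (rr_bounds q nu Hq Hn). set (r := rr nu q) in *.
  apply (is_lim_seq_le_le (fun _ => 0) _ (fun n => (p / ((1 - p) * (1 - r))) * p ^ n)).
  - intro n. split; [apply Rabs_pos|].
    pose proof (cc_rec q nu n Hq Hn). fold p r in H1.
    pose proof (cc_nz q nu n Hq Hn).
    pose proof (pow_le1 p n ltac:(lra)).
    assert (Hp1 : 0 < 1 - p ^ S n).
    { pose proof (pow_lt_1_compat p (S n) ltac:(lra) ltac:(lia)). lra. }
    assert (Hp2 : 1 - p <= 1 - p ^ S n) by (simpl; nra).
    assert (Hr1 : 1 - r <= 1 - r * p ^ n) by nra.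
    assert (E : cc nu q (S n) / cc nu q n = - p ^ S n / ((1 - p ^ S n) * (1 - r * p ^ n))).
    { assert (Hc : cc nu q (S n) = - p ^ S n * cc nu q n / ((1 - p ^ S n) * (1 - r * p ^ n))).
      { rewrite <- H1. field. split; nra. }
      rewrite Hc. field. repeat split; nra. }
    rewrite E. unfold Rdiv. rewrite Rabs_mult, Rabs_Ropp, Rabs_inv.
    rewrite (Rabs_right (p ^ S n)) by (apply Rle_ge, pow_le; lra).
    rewrite (Rabs_right ((1 - p ^ S n) * (1 - r * p ^ n))) by nra.
    idtac.
    change (p ^ S n) with (p * p ^ n) in *.
    replace (p * / ((1 - p) * (1 - r)) * p ^ n) with (p * p ^ n * / ((1 - p) * (1 - r))) by ring.
    apply Rmult_le_compat_l; [nra|]. apply Rinv_le_contravar; [nra|]. apply Rmult_le_compat; try lra. idtac.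
  - apply is_lim_seq_const.
  - replace (Finite 0) with (Rbar_mult (p / ((1 - p) * (1 - r))) 0) by (simpl; f_equal; ring).
    apply is_lim_seq_scal_l. apply is_lim_seq_geom. rewrite Rabs_right; lra.
Qed.

Lemma cc_radius q nu : 0 < q < 1 -> -1 < nu -> CV_radius (cc nu q) = p_infty.
Proof.
  intros Hq Hn. apply CV_radius_infinite_DAlembert.
  - intro n. apply cc_nz; auto.
  - apply cc_ratio; auto.
Qed.

Lemma sum_n_nonneg (a : nat -> R) n : (forall k, 0 <= a k) -> 0 <= sum_n a n.
Proof.
  intro H. induction n. rewrite sum_O. auto.
  rewrite sum_Sn. change (plus (sum_n a n) (a (S n))) with (sum_n a n + a (S n)).
  specialize (H (S n)). lra.
Qed.

Lemma sum_n_ge_term (a : nat -> R) n k : (forall k, 0 <= a k) -> (k <= n)%nat -> a k <= sum_n a n.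
Proof.
  intros H Hk. induction n.
  - assert (k = 0%nat) by lia. subst. rewrite sum_O. lra.
  - rewrite sum_Sn. change (plus (sum_n a n) (a (S n))) with (sum_n a n + a (S n)).
    destruct (Nat.eq_dec k (S n)).
    + subst. pose proof (sum_n_nonneg a n H). lra.
    + assert (k <= n)%nat by lia. specialize (IHn H0). specialize (H (S n)). lra.
Qed.

Lemma Series_ge_term (a : nat -> R) k : (forall k, 0 <= a k) -> ex_series a -> a k <= Series a.
Proof.
  intros H Hex. pose proof (Series_correct a Hex) as Hs.
  assert (Rbar_le (a k) (Series a)).
  { apply (is_lim_seq_le_loc (fun _ => a k) (sum_n a)); [| apply is_lim_seq_const | exact Hs].
    exists k. intros n Hn. apply sum_n_ge_term; auto. }
  simpl in H0. exact H0.
Qed.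

Lemma Series_nonneg (a : nat -> R) : (forall k, 0 <= a k) -> ex_series a -> 0 <= Series a.
Proof.
  intros H Hex. eapply Rle_trans; [apply (H 0%nat)|]. apply Series_ge_term; auto.
Qed.


Lemma PS_ser (a : nat -> R) y : CV_radius a = p_infty ->
  is_series (fun k => a k * y ^ k) (PSeries a y).
Proof.
  intro Hr. apply Series_correct. apply ex_series_Rabs.
  apply CV_disk_inside. rewrite Hr. simpl. exact I.
Qed.

Lemma PS_der (a : nat -> R) y : CV_radius a = p_infty ->
  is_derive (PSeries a) y (PSeries (PS_derive a) y).
Proof.
  intro Hr. apply is_derive_PSeries. rewrite Hr. simpl. exact I.
Qed.

Lemma PS_cont (a : nat -> R) y : CV_radius a = p_infty -> continuity_pt (PSeries a) y.
Proof.
  intro Hr. apply derivable_continuous_pt. exists (PSeries (PS_derive a) y).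
  apply is_derive_Reals. apply PS_der. auto.
Qed.

Definition PSB (a : nat -> R) M := Series (fun k => Rabs (a k * M ^ k)).

Lemma PSB_nonneg a M : CV_radius a = p_infty -> 0 <= PSB a M.
Proof.
  intro Hr. apply Series_nonneg. intro; apply Rabs_pos.
  apply CV_disk_inside. rewrite Hr. simpl. exact I.
Qed.

Lemma PS_bound (a : nat -> R) y M : CV_radius a = p_infty -> Rabs y <= M ->
  Rabs (PSeries a y) <= PSB a M.
Proof.
  intros Hr Hy. unfold PSeries, PSB.
  eapply Rle_trans; [apply Series_Rabs|].
  - apply CV_disk_inside. rewrite Hr. simpl. exact I.
  - apply Series_le.
    + intro n. split; [apply Rabs_pos|]. rewrite !Rabs_mult. apply Rmult_le_compat_l; [apply Rabs_pos|].
      rewrite <- !RPow_abs. apply pow_incr. split; [apply Rabs_pos|].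
      eapply Rle_trans; [exact Hy|]. apply Rle_abs.
    + apply CV_disk_inside. rewrite Hr. simpl. exact I.
Qed.

Lemma PS_lip (a : nat -> R) z w M : CV_radius a = p_infty -> Rabs z <= M -> Rabs w <= M ->
  Rabs (PSeries a z - PSeries a w) <= PSB (PS_derive a) M * Rabs (z - w).
Proof.
  intros Hr Hz Hw.
  destruct (MVT_gen (PSeries a) w z (PSeries (PS_derive a))) as [c [Hc Heq]].
  - intros x _. apply PS_der. auto.
  - intros x _. apply PS_cont. auto.
  - rewrite Heq, Rabs_mult. apply Rmult_le_compat_r; [apply Rabs_pos|].
    apply PS_bound. rewrite CV_radius_derive. auto.
    apply Rabs_le. destruct Hc as [Hc1 Hc2].
    apply Rabs_le_between in Hz. apply Rabs_le_between in Hw.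
    assert (Rmin w z >= -M) by (unfold Rmin; destruct Rle_dec; lra).
    assert (Rmax w z <= M) by (unfold Rmax; destruct Rle_dec; lra).
    lra.
Qed.

Lemma plus_R (a b : R) : plus a b = a + b. Proof. reflexivity. Qed.
Lemma scal_R (a b : R) : scal a b = a * b. Proof. reflexivity. Qed.

Ltac Rs := unfold plus, scal; simpl; unfold mult; simpl.

Definition GG nu q := PSeries (cc nu q).

Lemma GG_rec q nu y : 0 < q < 1 -> -1 < nu ->
  GG nu q y = (1 + rr nu q / q ^ 2 - q ^ 2 * y) * GG nu q (q ^ 2 * y)
              - rr nu q / q ^ 2 * GG nu q (q ^ 2 * (q ^ 2 * y)).
Proof.
  intros Hq Hn. unfold GG.
  pose proof (cc_radius q nu Hq Hn) as Hr.
  pose proof (p_bounds q Hq) as Hp.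
  set (p := q ^ 2) in *. set (r := rr nu q). set (s := r / p). set (a := cc nu q) in *.
  set (F := fun k => a k * y ^ k * (1 - p ^ k) * (1 - s * p ^ k)).
  set (L := PSeries a y - (1 + s) * PSeries a (p * y) + s * PSeries a (p * (p * y))).
  assert (HF : is_series F L).
  { pose proof (PS_ser a y Hr) as S1.
    pose proof (PS_ser a (p * y) Hr) as S2.
    pose proof (PS_ser a (p * (p * y)) Hr) as S3.
    apply (is_series_scal (- (1 + s))) in S2.
    apply (is_series_scal s) in S3.
    pose proof (is_series_plus _ _ _ _ S1 S2) as S12.
    pose proof (is_series_plus _ _ _ _ S12 S3) as S.
    unfold L. replace (PSeries a y - (1 + s) * PSeries a (p * y) + s * PSeries a (p * (p * y)))
      with (plus (plus (PSeries a y) (scal (- (1 + s)) (PSeries a (p * y)))) (scal s (PSeries a (p * (p * y))))).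
    2:{ Rs. ring. }
    eapply is_series_ext; [|exact S].
    intro k. unfold F. Rs. simpl.
    rewrite !Rpow_mult_distr. ring. }
  assert (HF0 : F 0%nat = 0) by (unfold F; simpl; ring).
  assert (HFS : is_series (fun k => F (S k)) L).
  { apply is_series_incr_1. rewrite HF0. unfold plus; simpl. rewrite Rplus_0_r. exact HF. }
  assert (HH : is_series (fun k => F (S k)) (- (p * y * PSeries a (p * y)))).
  { pose proof (PS_ser a (p * y) Hr) as S2.
    apply (is_series_scal (- (p * y))) in S2.
    replace (- (p * y * PSeries a (p * y))) with (scal (- (p * y)) (PSeries a (p * y)))
      by (Rs; ring).
    eapply is_series_ext; [|exact S2].
    intro k. Rs. unfold F.
    pose proof (cc_rec q nu k Hq Hn) as Hc. fold p r a in Hc.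
    assert (Hs : s * p ^ S k = r * p ^ k) by (unfold s; simpl; field; lra).
    rewrite Hs. rewrite (Rmult_comm (a (S k) * y ^ S k)).
    replace (1 - p ^ S k) with (1 - p ^ S k) by reflexivity.
    transitivity (y ^ S k * (a (S k) * (1 - p ^ S k) * (1 - r * p ^ k))); [|ring].
    rewrite Hc. rewrite Rpow_mult_distr. simpl. ring. }
  pose proof (is_series_unique _ _ HF) as E1.
  pose proof (is_series_unique _ _ HFS) as E2.
  pose proof (is_series_unique _ _ HH) as E3.
  assert (L = - (p * y * PSeries a (p * y))) by congruence.
  unfold L in H. fold s. lra.
Qed.

Lemma GG_cont q nu : 0 < q < 1 -> -1 < nu -> continuity (GG nu q).
Proof. intros Hq Hn x. apply PS_cont. apply cc_radius; auto. Qed.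

Lemma GG_zero_beyond q nu Y : 0 < q < 1 -> -1 < nu -> exists z, Y < z /\ GG nu q z = 0.
Proof.
  intros Hq Hn.
  pose proof (p_bounds q Hq) as Hp. pose proof (rr_bounds q nu Hq Hn) as Hr.
  pose proof (GG_cont q nu Hq Hn) as Hc.
  set (p := q ^ 2) in *. set (s := rr nu q / p).
  assert (Hs : 0 < s) by (unfold s; apply Rdiv_lt_0_compat; lra).
  set (y0 := Rmax (Y / (p * p)) ((1 + s) / p) + 1).
  assert (Hy1 : Y / (p * p) < y0) by (unfold y0; pose proof (Rmax_l (Y / (p * p)) ((1 + s) / p)); lra).
  assert (Hy2 : (1 + s) / p < y0) by (unfold y0; pose proof (Rmax_r (Y / (p * p)) ((1 + s) / p)); lra).
  assert (Hy0 : 0 < y0).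
  { assert (0 < (1 + s) / p) by (apply Rdiv_lt_0_compat; lra). lra. }
  assert (HY : Y < p * (p * y0)).
  { apply (Rmult_lt_compat_l (p * p)) in Hy1; [|nra].
    replace (p * p * (Y / (p * p))) with Y in Hy1 by (field; lra). lra. }
  assert (Hpy : 1 + s < p * y0).
  { apply (Rmult_lt_compat_l p) in Hy2; [|lra].
    replace (p * ((1 + s) / p)) with (1 + s) in Hy2 by (field; lra). lra. }
  assert (H12 : p * (p * y0) <= p * y0) by nra.
  assert (H23 : p * y0 <= y0) by nra.
  pose proof (GG_rec q nu y0 Hq Hn) as Hrec. fold p s in Hrec.
  destruct (Rle_dec (GG nu q (p * (p * y0)) * GG nu q (p * y0)) 0) as [C1|C1].
  - destruct (IVT_cor (GG nu q) _ _ Hc H12 C1) as [z [Hz Hz0]].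
    exists z. split; [lra|auto].
  - destruct (Rle_dec (GG nu q (p * y0) * GG nu q y0) 0) as [C2|C2].
    + destruct (IVT_cor (GG nu q) _ _ Hc H23 C2) as [z [Hz Hz0]].
      exists z. split; [lra|auto].
    + exfalso.
      set (g1 := GG nu q (p * (p * y0))) in *.
      set (g2 := GG nu q (p * y0)) in *.
      set (g3 := GG nu q y0) in *.
      assert (E : g2 * g3 = (1 + s - p * y0) * (g2 * g2) - s * (g1 * g2)).
      { rewrite Hrec. ring. }
      assert (0 <= g2 * g2) by nra.
      assert (0 < s * (g1 * g2)) by nra.
      nra.
Qed.

Lemma geom_dom_series (a : nat -> R) K r : 0 <= r < 1 -> (forall n, Rabs (a n) <= K * r ^ n) ->
  ex_series (fun n => Rabs (a n)) /\ Series (fun n => Rabs (a n)) <= K / (1 - r).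
Proof.
  intros Hr Ha.
  assert (Hg : ex_series (fun n => K * r ^ n)).
  { apply (ex_series_scal_l K (fun n => r ^ n)). apply ex_series_geom. rewrite Rabs_right; lra. }
  assert (Hex : ex_series (fun n => Rabs (a n))).
  { apply (@ex_series_le R_AbsRing R_CompleteNormedModule _ (fun n => K * r ^ n)); auto.
    intro n. unfold norm; simpl; unfold abs; simpl. rewrite Rabs_Rabsolu. auto. }
  split; auto.
  eapply Rle_trans. apply (Series_le _ (fun n => K * r ^ n)); auto.
  intro n; split; [apply Rabs_pos|auto].
  rewrite Series_scal_l, Series_geom by (rewrite Rabs_right; lra). unfold Rdiv. lra.
Qed.

Lemma geom_dom_lim (u : nat -> R) K r : 0 <= r < 1 -> (forall n, Rabs (u n) <= K * r ^ n) ->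
  is_lim_seq u 0.
Proof.
  intros Hr Hu. apply is_lim_seq_abs_0.
  apply (is_lim_seq_le_le (fun _ => 0) _ (fun n => K * r ^ n)).
  - intro n; split; [apply Rabs_pos|auto].
  - apply is_lim_seq_const.
  - replace (Finite 0) with (Rbar_mult K 0) by (simpl; f_equal; ring).
    apply is_lim_seq_scal_l. apply is_lim_seq_geom. rewrite Rabs_right; lra.
Qed.

Definition Wt nu q y z n := GG nu q (y * (q^2) ^ n) * GG nu q (z * (q^2) ^ S n)
                          - GG nu q (z * (q^2) ^ n) * GG nu q (y * (q^2) ^ S n).
Definition Tt nu q y z n := (rr nu q / q ^ 2) ^ n * Wt nu q y z n.
Definition St nu q y z n := rr nu q ^ n * GG nu q (y * (q^2) ^ S n) * GG nu q (z * (q^2) ^ S n).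

Lemma GG_rec' q nu w n : 0 < q < 1 -> -1 < nu ->
  GG nu q (w * (q^2) ^ n) = (1 + rr nu q / q ^ 2 - q ^ 2 * (w * (q^2) ^ n)) * GG nu q (w * (q^2) ^ S n)
              - rr nu q / q ^ 2 * GG nu q (w * (q^2) ^ S (S n)).
Proof.
  intros Hq Hn. rewrite (GG_rec q nu (w * (q^2) ^ n) Hq Hn).
  replace (q ^ 2 * (q ^ 2 * (w * (q ^ 2) ^ n))) with (w * (q^2) ^ S (S n)) by (simpl; ring).
  replace (q ^ 2 * (w * (q ^ 2) ^ n)) with (w * (q^2) ^ S n) by (simpl; ring).
  reflexivity.
Qed.

Lemma Tstep q nu y z n : 0 < q < 1 -> -1 < nu ->
  Tt nu q y z n - Tt nu q y z (S n) = - (y - z) * q ^ 2 * St nu q y z n.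
Proof.
  intros Hq Hn. unfold Tt, Wt, St.
  pose proof (p_bounds q Hq) as Hp.
  rewrite (GG_rec' q nu y n Hq Hn), (GG_rec' q nu z n Hq Hn).
  assert (Hr : rr nu q = rr nu q / q ^ 2 * q ^ 2) by (field; lra).
  set (s := rr nu q / q ^ 2) in *. rewrite Hr. rewrite Rpow_mult_distr.
  change (s ^ S n) with (s * s ^ n). ring.
Qed.

Lemma Tsum q nu y z N : 0 < q < 1 -> -1 < nu ->
  Tt nu q y z 0 - Tt nu q y z (S N) = - (y - z) * q ^ 2 * sum_n (St nu q y z) N.
Proof.
  intros Hq Hn. induction N.
  - rewrite sum_O. apply Tstep; auto.
  - rewrite sum_Sn. unfold plus; simpl.
    pose proof (Tstep q nu y z (S N) Hq Hn). lra.
Qed.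

Lemma St_identity q nu y z : 0 < q < 1 -> -1 < nu -> 0 < y -> GG nu q y = 0 -> 0 <= z <= 2 * y ->
  ex_series (St nu q y z) /\
  GG nu q z * GG nu q (y * q ^ 2) = (y - z) * q ^ 2 * Series (St nu q y z).
Proof.
  intros Hq Hn Hy Hy0 Hz.
  pose proof (cc_radius q nu Hq Hn) as Hrad.
  pose proof (p_bounds q Hq) as Hp. pose proof (rr_bounds q nu Hq Hn) as Hr.
  set (p := q ^ 2) in *. set (r := rr nu q) in *.
  set (M := 2 * y). set (B := PSB (cc nu q) M). set (L := PSB (PS_derive (cc nu q)) M).
  assert (HB0 : 0 <= B) by (apply PSB_nonneg; auto).
  assert (HL0 : 0 <= L) by (apply PSB_nonneg; rewrite CV_radius_derive; auto).
  assert (HB : forall w, 0 <= w <= M -> Rabs (GG nu q w) <= B).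
  { intros w Hw. apply PS_bound; auto. rewrite Rabs_right; lra. }
  assert (HL : forall w1 w2, 0 <= w1 <= M -> 0 <= w2 <= M ->
            Rabs (GG nu q w1 - GG nu q w2) <= L * Rabs (w1 - w2)).
  { intros w1 w2 H1 H2. apply PS_lip; auto; rewrite Rabs_right; lra. }
  assert (Hpw : forall n, 0 <= p ^ n <= 1 /\ p ^ S n <= p ^ n).
  { intro n. pose proof (pow_le1 p n ltac:(lra)). split; auto. simpl. nra. }
  assert (Hyn : forall n, 0 <= y * p ^ n <= M /\ 0 <= y * p ^ S n <= y * p ^ n).
  { intro n. destruct (Hpw n) as [[A1 A2] A3]. pose proof (Hpw (S n)) as [[A4 _] _].
    unfold M. split; split; nra. }
  assert (Hzn : forall n, 0 <= z * p ^ n <= M /\ 0 <= z * p ^ S n <= z * p ^ n).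
  { intro n. destruct (Hpw n) as [[A1 A2] A3]. pose proof (Hpw (S n)) as [[A4 _] _].
    unfold M. split; split; nra. }
  assert (HSt : forall n, Rabs (St nu q y z n) <= (B * B) * r ^ n).
  { intro n. unfold St. fold p r. rewrite !Rabs_mult.
    rewrite (Rabs_right (r ^ n)) by (apply Rle_ge, pow_le; lra).
    pose proof (HB _ (proj1 (Hyn (S n)))). pose proof (HB _ (proj1 (Hzn (S n)))).
    assert (0 <= r ^ n) by (apply pow_le; lra).
    pose proof (Rabs_pos (GG nu q (y * p ^ S n))). pose proof (Rabs_pos (GG nu q (z * p ^ S n))).
    assert (Rabs (GG nu q (y * p ^ S n)) * Rabs (GG nu q (z * p ^ S n)) <= B * B)
      by (apply Rmult_le_compat; auto).
    nra. }
  assert (HTt : forall n, Rabs (Tt nu q y z n) <= (B * L * (y + z)) * r ^ n).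
  { intro n. unfold Tt, Wt. fold p r.
    set (s := r / p).
    assert (Hs : r ^ n = s ^ n * p ^ n) by (rewrite <- Rpow_mult_distr; unfold s; f_equal; field; lra).
    assert (Hs0 : 0 <= s ^ n) by (apply pow_le; unfold s; apply Rlt_le, Rdiv_lt_0_compat; lra).
    rewrite Rabs_mult, (Rabs_right (s ^ n)) by lra. rewrite Hs.
    set (u0 := GG nu q (y * p ^ n)). set (u1 := GG nu q (y * p ^ S n)).
    set (v0 := GG nu q (z * p ^ n)). set (v1 := GG nu q (z * p ^ S n)).
    assert (E : u0 * v1 - v0 * u1 = u0 * (v1 - v0) + v0 * (u0 - u1)) by ring.
    rewrite E.
    destruct (Hyn n) as [Hy1 Hy2]. destruct (Hzn n) as [Hz1 Hz2].
    assert (Hu0 : Rabs u0 <= B) by (apply HB; auto).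
    assert (Hv0 : Rabs v0 <= B) by (apply HB; auto).
    assert (Hv : Rabs (v1 - v0) <= L * (z * p ^ n)).
    { eapply Rle_trans; [apply HL; lra|]. apply Rmult_le_compat_l; auto.
      apply Rabs_le. lra. }
    assert (Hu : Rabs (u0 - u1) <= L * (y * p ^ n)).
    { eapply Rle_trans; [apply HL; lra|]. apply Rmult_le_compat_l; auto.
      apply Rabs_le. lra. }
    assert (Hw : Rabs (u0 * (v1 - v0) + v0 * (u0 - u1)) <= B * L * (y + z) * p ^ n).
    { eapply Rle_trans; [apply Rabs_triang|]. rewrite !Rabs_mult.
      assert (Rabs u0 * Rabs (v1 - v0) <= B * (L * (z * p ^ n)))
        by (apply Rmult_le_compat; auto; apply Rabs_pos).
      assert (Rabs v0 * Rabs (u0 - u1) <= B * (L * (y * p ^ n)))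
        by (apply Rmult_le_compat; auto; apply Rabs_pos).
      nra. }
    assert (s ^ n * Rabs (u0 * (v1 - v0) + v0 * (u0 - u1)) <= s ^ n * (B * L * (y + z) * p ^ n))
      by (apply Rmult_le_compat_l; auto).
    nra. }
  destruct (geom_dom_series _ _ r ltac:(lra) HSt) as [HexA _].
  assert (Hex : ex_series (St nu q y z)) by (apply ex_series_Rabs; auto).
  split; auto.
  assert (HT0 : Tt nu q y z 0 = - (GG nu q z * GG nu q (y * p))).
  { unfold Tt, Wt. rewrite !pow_O, !pow_1, !Rmult_1_r, Rmult_1_l. fold p. rewrite Hy0. ring. }
  assert (Hlim1 : is_lim_seq (fun N => Tt nu q y z (S N)) 0).
  { apply (is_lim_seq_incr_1 (Tt nu q y z)). apply (geom_dom_lim _ _ r ltac:(lra) HTt). }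
  assert (Hlim2 : is_lim_seq (sum_n (St nu q y z)) (Series (St nu q y z))).
  { apply Series_correct. auto. }
  apply (is_lim_seq_scal_l _ (- (y - z) * p)) in Hlim2.
  simpl in Hlim2.
  pose proof (is_lim_seq_plus' _ _ _ _ Hlim1 Hlim2) as Hlim.
  assert (Hc : forall N, Tt nu q y z (S N) + - (y - z) * p * sum_n (St nu q y z) N = Tt nu q y z 0).
  { intro N. pose proof (Tsum q nu y z N Hq Hn). fold p in H. lra. }
  apply (is_lim_seq_ext _ _ _ Hc) in Hlim.
  pose proof (is_lim_seq_unique _ _ Hlim) as U1.
  rewrite Lim_seq_const in U1. injection U1. intro U.
  rewrite HT0 in U. lra.
Qed.

Lemma GG_simple q nu y : 0 < q < 1 -> -1 < nu -> 0 < y -> GG nu q y = 0 ->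
  PSeries (PS_derive (cc nu q)) y <> 0.
Proof.
  intros Hq Hn Hy Hy0 HD.
  pose proof (cc_radius q nu Hq Hn) as Hrad.
  pose proof (p_bounds q Hq) as Hp. pose proof (rr_bounds q nu Hq Hn) as Hr.
  set (p := q ^ 2) in *. set (r := rr nu q) in *.
  set (M := 2 * y). set (B := PSB (cc nu q) M). set (L := PSB (PS_derive (cc nu q)) M).
  assert (HB0 : 0 <= B) by (apply PSB_nonneg; auto).
  assert (HL0 : 0 <= L) by (apply PSB_nonneg; rewrite CV_radius_derive; auto).
  assert (HB : forall w, 0 <= w <= M -> Rabs (GG nu q w) <= B).
  { intros w Hw. apply PS_bound; auto. rewrite Rabs_right; lra. }
  assert (HL : forall w1 w2, 0 <= w1 <= M -> 0 <= w2 <= M ->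
            Rabs (GG nu q w1 - GG nu q w2) <= L * Rabs (w1 - w2)).
  { intros w1 w2 H1 H2. apply PS_lip; auto; rewrite Rabs_right; lra. }
  assert (Hpw : forall n, 0 <= p ^ n <= 1).
  { intro n. apply pow_le1. lra. }
  set (Sf := fun z => Series (St nu q y z)).
  assert (HSy : 0 < Sf y).
  { set (c0 := cc nu q 0).
    assert (Hc0 : c0 <> 0) by (apply cc_nz; auto).
    assert (HG0 : GG nu q 0 = c0) by (unfold GG; apply PSeries_0).
    assert (Hpos : 0 < Rabs c0 / (L * y + 1)).
    { apply Rdiv_lt_0_compat. apply Rabs_pos_lt; auto. nra. }
    destruct (pow_lt_1_zero p ltac:(rewrite Rabs_right; lra) _ Hpos) as [N HN].
    specialize (HN (S N) ltac:(lia)). rewrite Rabs_right in HN by (apply Rle_ge, pow_le; lra).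
    assert (Hk : GG nu q (y * p ^ S N) <> 0).
    { intro Hk0.
      pose proof (Hpw (S N)).
      assert (Hl := HL (y * p ^ S N) 0 ltac:(unfold M; split; nra) ltac:(unfold M; lra)).
      rewrite Hk0, HG0, Rminus_0_r, Rminus_0_l, Rabs_Ropp in Hl.
      rewrite (Rabs_right (y * p ^ S N)) in Hl by nra.
      apply (Rmult_lt_compat_r (L * y + 1)) in HN; [|nra].
      unfold Rdiv in HN. rewrite Rmult_assoc, Rinv_l, Rmult_1_r in HN by nra.
      nra. }
    assert (Hnn : forall n, 0 <= St nu q y y n).
    { intro n. unfold St. fold p r. assert (0 <= r ^ n) by (apply pow_le; lra).
      rewrite Rmult_assoc. apply Rmult_le_pos; auto. apply Rle_0_sqr. }
    destruct (St_identity q nu y y Hq Hn Hy Hy0 ltac:(lra)) as [Hex _].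
    eapply Rlt_le_trans; [|apply (Series_ge_term _ N Hnn Hex)].
    unfold St. fold p r. rewrite Rmult_assoc. apply Rmult_lt_0_compat.
    apply pow_lt; lra. fold p in Hk. apply Rsqr_pos_lt in Hk. exact Hk. }
  assert (HSl : forall z, 0 <= z <= 2 * y -> Rabs (Sf z - Sf y) <= (B * L * Rabs (z - y)) / (1 - r)).
  { intros z Hz.
    destruct (St_identity q nu y z Hq Hn Hy Hy0 Hz) as [Exz _].
    destruct (St_identity q nu y y Hq Hn Hy Hy0 ltac:(lra)) as [Exy _].
    unfold Sf. rewrite <- Series_minus by auto.
    assert (Hd : forall n, Rabs (St nu q y z n - St nu q y y n) <= (B * L * Rabs (z - y)) * r ^ n).
    { intro n. unfold St. fold p r.
      replace (r ^ n * GG nu q (y * p ^ S n) * GG nu q (z * p ^ S n) -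
               r ^ n * GG nu q (y * p ^ S n) * GG nu q (y * p ^ S n))
        with (r ^ n * (GG nu q (y * p ^ S n) * (GG nu q (z * p ^ S n) - GG nu q (y * p ^ S n)))) by ring.
      pose proof (Hpw (S n)) as Hpn.
      assert (H0r : 0 <= r ^ n) by (apply pow_le; lra).
      rewrite Rabs_mult, (Rabs_right (r ^ n)) by lra. rewrite Rabs_mult.
      assert (H1 : Rabs (GG nu q (y * p ^ S n)) <= B) by (apply HB; unfold M; split; nra).
      assert (H2 : Rabs (GG nu q (z * p ^ S n) - GG nu q (y * p ^ S n)) <= L * Rabs (z - y)).
      { eapply Rle_trans; [apply HL; unfold M; split; nra|].
        apply Rmult_le_compat_l; auto.
        replace (z * p ^ S n - y * p ^ S n) with ((z - y) * p ^ S n) by ring.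
        rewrite Rabs_mult, (Rabs_right (p ^ S n)) by lra.
        pose proof (Rabs_pos (z - y)). nra. }
      assert (Rabs (GG nu q (y * p ^ S n)) *
              Rabs (GG nu q (z * p ^ S n) - GG nu q (y * p ^ S n)) <= B * (L * Rabs (z - y)))
        by (apply Rmult_le_compat; auto; apply Rabs_pos).
      nra. }
    destruct (geom_dom_series _ _ r ltac:(lra) Hd) as [Ea Sa].
    eapply Rle_trans; [apply Series_Rabs; auto|]. exact Sa. }
  pose proof (PS_der (cc nu q) y Hrad) as Hder. fold (GG nu q) in Hder. rewrite HD in Hder.
  apply is_derive_Reals in Hder.
  set (g := GG nu q (y * p)).
  set (eps := p * Sf y / (4 * (Rabs g + 1))).
  assert (Heps : 0 < eps).
  { unfold eps. apply Rdiv_lt_0_compat; [nra|]. pose proof (Rabs_pos g). lra. }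
  destruct (Hder eps Heps) as [delta Hdelta].
  pose proof (cond_pos delta) as Hdp.
  set (h := Rmin (delta / 2) (Rmin (y / 2) (Sf y * (1 - r) / (2 * (B * L + 1))))).
  assert (Hh1 : h <= delta / 2) by apply Rmin_l.
  assert (Hh2 : h <= y / 2) by (eapply Rle_trans; [apply Rmin_r|apply Rmin_l]).
  assert (Hh3 : h <= Sf y * (1 - r) / (2 * (B * L + 1))) by (eapply Rle_trans; [apply Rmin_r|apply Rmin_r]).
  assert (Hh0 : 0 < h).
  { unfold h. apply Rmin_pos; [lra|]. apply Rmin_pos; [lra|].
    apply Rdiv_lt_0_compat; nra. }
  specialize (Hdelta h ltac:(lra) ltac:(rewrite Rabs_right; lra)).
  rewrite Hy0, Rminus_0_r, Rminus_0_r in Hdelta.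
  unfold Rdiv in Hdelta. rewrite Rabs_mult, Rabs_inv, (Rabs_right h) in Hdelta by lra.
  assert (A1 : Rabs (GG nu q (y + h)) < eps * h).
  { apply (Rmult_lt_compat_r h) in Hdelta; [|lra].
    rewrite Rmult_assoc, Rinv_l, Rmult_1_r in Hdelta by lra. exact Hdelta. }
  destruct (St_identity q nu y (y + h) Hq Hn Hy Hy0 ltac:(lra)) as [_ Hid].
  fold p in Hid. fold g in Hid. fold (Sf (y + h)) in Hid.
  specialize (HSl (y + h) ltac:(lra)).
  replace (y + h - y) with h in HSl by ring. rewrite (Rabs_right h) in HSl by lra.
  assert (A3 : Sf y / 2 <= Sf (y + h)).
  { assert (B * L * h / (1 - r) <= Sf y / 2).
    { apply (Rmult_le_reg_r (1 - r)); [lra|]. unfold Rdiv at 1.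
      rewrite Rmult_assoc, Rinv_l, Rmult_1_r by lra.
      apply (Rmult_le_compat_l (B * L)) in Hh3; [|nra].
      assert (B * L * (Sf y * (1 - r) / (2 * (B * L + 1))) <= Sf y / 2 * (1 - r)).
      { unfold Rdiv. rewrite <- !Rmult_assoc.
        apply (Rmult_le_reg_r (2 * (B * L + 1))); [nra|].
        rewrite Rmult_assoc, Rinv_l, Rmult_1_r by nra. nra. }
      lra. }
    apply Rabs_le_between in HSl. lra. }
  assert (A2 : h * p * Sf (y + h) <= eps * h * Rabs g).
  { assert (E : h * p * Sf (y + h) = - (GG nu q (y + h) * g)) by (rewrite Hid; ring).
    rewrite E. eapply Rle_trans; [apply Rle_abs|]. rewrite Rabs_Ropp, Rabs_mult.
    apply Rmult_le_compat_r; [apply Rabs_pos|lra]. }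
  assert (A4 : p * Sf (y + h) <= eps * Rabs g).
  { apply (Rmult_le_reg_l h); [lra|]. nra. }
  assert (A5 : eps * Rabs g <= p * Sf y / 4).
  { unfold eps. pose proof (Rabs_pos g).
    apply (Rmult_le_reg_r (4 * (Rabs g + 1))); [lra|].
    unfold Rdiv.
    replace (p * Sf y * / (4 * (Rabs g + 1)) * Rabs g * (4 * (Rabs g + 1))) with (p * Sf y * Rabs g) by (field; lra).
    replace (p * Sf y * / 4 * (4 * (Rabs g + 1))) with (p * Sf y * (Rabs g + 1)) by field.
    assert (0 < p * Sf y) by nra. nra. }
  assert (0 < p * Sf y) by nra.
  nra.
Qed.

Lemma next_ex (Z : R -> Prop) :
  (forall X, exists z, Z z /\ X < z) ->
  (forall z, Z z -> exists e, 0 < e /\ forall x, Z x -> x <> z -> e <= Rabs (x - z)) ->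
  (forall m, (forall e, 0 < e -> exists z, Z z /\ Rabs (z - m) < e) -> Z m) ->
  forall c, exists m, Z m /\ c < m /\ forall z, Z z -> c < z -> m <= z.
Proof.
  intros Hunb Hiso Hcl c.
  set (F := fun w => Z (- w) /\ c < - w).
  assert (Hb : bound F) by (exists (- c); intros w [_ Hw]; lra).
  assert (Hne : exists w, F w).
  { destruct (Hunb c) as [z [Hz Hcz]]. exists (- z). unfold F. rewrite Ropp_involutive. auto. }
  destruct (completeness F Hb Hne) as [m' [Hub Hleast]].
  set (m := - m').
  assert (Hlow : forall z, Z z -> c < z -> m <= z).
  { intros z Hz Hcz. assert (F (- z)) by (unfold F; rewrite Ropp_involutive; auto).
    specialize (Hub _ H). unfold m. lra. }
  assert (Hcm : c <= m).
  { assert (m' <= - c) by (apply Hleast; intros w [_ Hw]; lra). unfold m. lra. }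
  assert (Happ : forall e, 0 < e -> exists z, Z z /\ c < z /\ z < m + e).
  { intros e He. destruct (classic (exists z, Z z /\ c < z /\ z < m + e)) as [H|H]; auto.
    exfalso. assert (m' <= - (m + e)).
    { apply Hleast. intros w [Hw1 Hw2].
      destruct (Rlt_dec (- w) (m + e)) as [Hl|Hl].
      - exfalso. apply H. exists (- w). auto.
      - lra. }
    unfold m in H0. lra. }
  assert (HZm : Z m).
  { apply Hcl. intros e He. destruct (Happ e He) as [z [Hz [Hcz Hze]]].
    exists z. split; auto. pose proof (Hlow z Hz Hcz). rewrite Rabs_right; lra. }
  exists m. split; auto. split; auto.
  destruct (Rle_lt_or_eq_dec c m Hcm) as [Hlt|Heq]; auto.
  exfalso. rewrite <- Heq in HZm.
  destruct (Hiso c HZm) as [e [He Hiso']].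
  destruct (Happ e He) as [z [Hz [Hcz Hze]]].
  specialize (Hiso' z Hz ltac:(lra)). rewrite Rabs_right in Hiso' by lra. lra.
Qed.

Lemma enum_zeros (Z : R -> Prop) :
  (forall x, Z x -> 0 < x) ->
  (forall X, exists z, Z z /\ X < z) ->
  (forall z, Z z -> exists e, 0 < e /\ forall x, Z x -> x <> z -> e <= Rabs (x - z)) ->
  (forall m, (forall e, 0 < e -> exists z, Z z /\ Rabs (z - m) < e) -> Z m) ->
  exists f : nat -> R, (forall m n, f m = f n -> m = n) /\ (forall x, Z x <-> exists n, f n = x).
Proof.
  intros Hpos Hunb Hiso Hcl.
  pose proof (next_ex Z Hunb Hiso Hcl) as Hnext.
  set (nx := fun c => proj1_sig (constructive_indefinite_description _ (Hnext c))).
  assert (Hnx : forall c, Z (nx c) /\ c < nx c /\ forall z, Z z -> c < z -> nx c <= z).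
  { intro c. unfold nx. destruct (constructive_indefinite_description _ (Hnext c)). simpl. auto. }
  set (f := fix f n := match n with O => nx 0 | S k => nx (f k) end).
  assert (Hf0 : f O = nx 0) by reflexivity.
  assert (HfS : forall n, f (S n) = nx (f n)) by reflexivity.
  assert (HZf : forall n, Z (f n)).
  { intro n. destruct n; [rewrite Hf0|rewrite HfS]; apply Hnx. }
  assert (Hinc : forall n, f n < f (S n)) by (intro n; rewrite HfS; apply Hnx).
  assert (Hmono : forall m k, f m < f (m + S k)%nat).
  { intros m k. induction k.
    - rewrite Nat.add_1_r. apply Hinc.
    - rewrite Nat.add_succ_r. specialize (Hinc (m + S k)%nat). lra. }
  exists f. split.
  - intros m n Hmn. destruct (lt_eq_lt_dec m n) as [[Hlt|Heq]|Hgt]; auto.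
    + exfalso. replace n with (m + S (n - m - 1))%nat in Hmn by lia.
      specialize (Hmono m (n - m - 1)%nat). lra.
    + exfalso. replace m with (n + S (m - n - 1))%nat in Hmn by lia.
      specialize (Hmono n (m - n - 1)%nat). lra.
  - intro x. split.
    + intro Hx.
      assert (Hge : exists n, x <= f n).
      { destruct (classic (exists n, x <= f n)) as [H|H]; auto. exfalso.
        assert (Hlt : forall n, f n < x).
        { intro n. destruct (Rlt_dec (f n) x); auto. exfalso. apply H. exists n. lra. }
        set (F := fun w => exists n, w = f n).
        assert (Hb : bound F) by (exists x; intros w [n ->]; apply Rlt_le, Hlt).
        destruct (completeness F Hb (ex_intro _ (f O) (ex_intro _ O eq_refl))) as [L [HubL HleL]].
        assert (Happ : forall e, 0 < e -> exists n, L - e < f n).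
        { intros e He. destruct (classic (exists n, L - e < f n)) as [H'|H']; auto.
          exfalso. assert (L <= L - e).
          { apply HleL. intros w [n ->]. destruct (Rlt_dec (L - e) (f n)) as [Hl|Hl].
            - exfalso. apply H'. exists n. auto.
            - lra. }
          lra. }
        assert (Hfle : forall n, f n <= L) by (intro n; apply HubL; exists n; auto).
        assert (HZL : Z L).
        { apply Hcl. intros e He. destruct (Happ e He) as [n Hn].
          exists (f n). split; auto. pose proof (Hfle n). rewrite Rabs_left1 by lra. lra. }
        destruct (Hiso L HZL) as [e [He Hiso']].
        destruct (Happ e He) as [n Hn].
        pose proof (Hinc n). pose proof (Hfle (S n)).
        specialize (Hiso' (f n) (HZf n) ltac:(lra)). rewrite Rabs_left1 in Hiso' by lra. lra. }
      destruct Hge as [n Hn].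
      revert Hn. induction n; intro Hn.
      * exists O. rewrite Hf0 in *. destruct (Hnx 0) as [_ [_ Hmin]].
        specialize (Hmin x Hx (Hpos x Hx)). lra.
      * destruct (Rle_dec x (f n)) as [Hle|Hle]; auto.
        exists (S n). rewrite HfS in *. destruct (Hnx (f n)) as [_ [_ Hmin]].
        specialize (Hmin x Hx ltac:(lra)). lra.
    + intros [n <-]. auto.
Qed.

Definition PP q := qpoch_inf (q ^ 2) (q ^ 2).

Lemma PP_pos q : 0 < q < 1 -> 0 < PP q.
Proof. intros Hq. pose proof (p_bounds q Hq). apply qpoch_inf_spec; lra. Qed.

Lemma HE_eq q nu x : HE_J nu q x = Rpower x nu * GG nu q (x ^ 2) * / PP q.
Proof.
  unfold HE_J, GG, PSeries, PP.
  rewrite (Series_ext _ (fun k => cc nu q k * (x ^ 2) ^ k)).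
  - unfold Rdiv. ring.
  - intro k. unfold HE_term, cc, CC. rewrite (pow_mult x 2 k). reflexivity.
Qed.

Definition Gd nu q := PSeries (PS_derive (cc nu q)).

Lemma HE_derive q nu a : 0 < q < 1 -> -1 < nu -> 0 < a ->
  is_derive (HE_J nu q) a
    ((nu * Rpower a (nu - 1) * GG nu q (a ^ 2) + Rpower a nu * (2 * a * Gd nu q (a ^ 2))) * / PP q).
Proof.
  intros Hq Hn Ha.
  pose proof (cc_radius q nu Hq Hn) as Hrad.
  assert (Hsq : is_derive (fun x => x ^ 2) a (2 * a)).
  { apply is_derive_Reals. pose proof (derivable_pt_lim_pow a 2) as Hd.
    simpl in Hd. replace (2 * a) with ((1 + 1) * (a * 1)) by ring. exact Hd. }
  assert (HG : is_derive (GG nu q) (a ^ 2) (Gd nu q (a ^ 2))) by (apply PS_der; auto).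
  pose proof (is_derive_comp (GG nu q) (fun x => x ^ 2) a _ _ HG Hsq) as Hpsi.
  assert (Hpow : is_derive (fun x => Rpower x nu) a (nu * Rpower a (nu - 1))).
  { apply is_derive_Reals. apply derivable_pt_lim_power. auto. }
  pose proof (is_derive_mult _ _ a _ _ Hpow Hpsi Rmult_comm) as Hprod.
  pose proof (is_derive_mult _ _ a _ _ Hprod (is_derive_const (/ PP q) a) Rmult_comm) as Hall.
  unfold plus, mult, scal, zero in Hall; simpl in Hall. unfold mult in Hall; simpl in Hall.
  rewrite Rmult_0_r, Rplus_0_r in Hall.
  eapply is_derive_ext; [intro x; symmetry; apply HE_eq|].
  eapply is_derive_ext; [|exact Hall]. intro x. reflexivity.
Qed.

Lemma cont_nonzero (f : R -> R) a : continuity_pt f a -> f a <> 0 ->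
  exists e, 0 < e /\ forall x, Rabs (x - a) < e -> f x <> 0.
Proof.
  intros Hc Hfa.
  unfold continuity_pt, continue_in, limit1_in, limit_in in Hc. simpl in Hc.
  destruct (Hc (Rabs (f a)) (Rabs_pos_lt _ Hfa)) as [e [He H]].
  exists e. split; auto. intros x Hx Hfx.
  destruct (Req_dec a x) as [<-|Hne]; [auto|].
  specialize (H x (conj (conj I Hne) Hx)). unfold R_dist in H.
  rewrite Hfx, Rminus_0_l, Rabs_Ropp in H. lra.
Qed.

Lemma iso_from_derive (f : R -> R) a d : is_derive f a d -> d <> 0 -> f a = 0 ->
  exists e, 0 < e /\ forall x, x <> a -> Rabs (x - a) < e -> f x <> 0.
Proof.
  intros Hd Hd0 Hfa. apply is_derive_Reals in Hd.
  destruct (Hd (Rabs d / 2) ltac:(pose proof (Rabs_pos_lt _ Hd0); lra)) as [delta Hdel].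
  exists delta. split; [apply cond_pos|]. intros x Hx Hxa Hfx.
  specialize (Hdel (x - a) ltac:(intro; apply Hx; lra) Hxa).
  rewrite Rplus_minus in Hdel.
  rewrite Hfx, Hfa in Hdel. unfold Rdiv in Hdel. rewrite Rminus_0_r, Rmult_0_l, Rminus_0_l, Rabs_Ropp in Hdel.
  pose proof (Rabs_pos_lt _ Hd0). lra.
Qed.

Theorem theorem3p4 (q nu : R) (hq0 : 0 < q) (hq1 : q < 1) (hnu : -1 < nu) :
  (exists f : nat -> R,
      (forall m n : nat, f m = f n -> m = n) /\
      (forall x : R, (0 < x /\ HE_J nu q x = 0) <-> exists n : nat, f n = x)) /\
  (forall a : R, 0 < a -> HE_J nu q a = 0 ->
      exists d : R, is_derive (HE_J nu q) a d /\ d <> 0).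
Proof.
  assert (Hq : 0 < q < 1) by lra.
  pose proof (PP_pos q Hq) as HP.
  assert (HZeq : forall x, 0 < x -> (HE_J nu q x = 0 <-> GG nu q (x ^ 2) = 0)).
  { intros x Hx. rewrite HE_eq.
    assert (0 < Rpower x nu) by (unfold Rpower; apply exp_pos).
    assert (0 < / PP q) by (apply Rinv_0_lt_compat; auto).
    split; intro H1.
    - destruct (Req_dec (GG nu q (x ^ 2)) 0); auto. exfalso.
      assert (Rpower x nu * GG nu q (x ^ 2) * / PP q <> 0).
      { apply Rmult_integral_contrapositive_currified; [|lra].
        apply Rmult_integral_contrapositive_currified; lra. }
      auto.
    - rewrite H1, Rmult_0_r, Rmult_0_l. reflexivity. }
  assert (Hderiv : forall a, 0 < a -> HE_J nu q a = 0 ->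
            exists d, is_derive (HE_J nu q) a d /\ d <> 0).
  { intros a Ha Hz. apply HZeq in Hz; auto.
    eexists. split; [apply HE_derive; auto|].
    rewrite Hz. rewrite Rmult_0_r, Rplus_0_l.
    assert (0 < Rpower a nu) by (unfold Rpower; apply exp_pos).
    assert (0 < / PP q) by (apply Rinv_0_lt_compat; auto).
    assert (Gd nu q (a ^ 2) <> 0).
    { apply GG_simple; auto. nra. }
    repeat apply Rmult_integral_contrapositive_currified; lra. }
  split; [|exact Hderiv].
  apply enum_zeros.
  - intros x [Hx _]; auto.
  -
    intro X.
    destruct (GG_zero_beyond q nu ((Rmax X 1) ^ 2) Hq hnu) as [z [Hz Hz0]].
    pose proof (Rmax_l X 1). pose proof (Rmax_r X 1).
    assert (Hz1 : 0 < z) by nra.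
    set (x := sqrt z).
    assert (Hx2 : x ^ 2 = z) by (unfold x; simpl; rewrite Rmult_1_r; apply sqrt_sqrt; lra).
    assert (Hx0 : 0 <= x) by (apply sqrt_pos).
    assert (HxX : Rmax X 1 < x) by nra.
    exists x. split; [split; [lra|]|lra].
    apply HZeq; [lra|]. rewrite Hx2. auto.
  -
    intros z [Hz Hz0].
    destruct (Hderiv z Hz Hz0) as [d [Hd Hd0]].
    destruct (iso_from_derive _ _ _ Hd Hd0 Hz0) as [e [He Hiso]].
    exists e. split; auto. intros x [Hx Hx0] Hxz.
    destruct (Rlt_dec (Rabs (x - z)) e) as [Hl|Hl]; [|lra].
    exfalso. apply (Hiso x Hxz Hl Hx0).
  -
    assert (Hrad := cc_radius q nu Hq hnu).
    assert (Hpsi : continuity_pt (comp (GG nu q) (fun x => x ^ 2)) 0).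
    { apply continuity_pt_comp.
      - apply derivable_continuous_pt. eexists. apply derivable_pt_lim_pow.
      - apply PS_cont; auto. }
    assert (Hpsi0 : comp (GG nu q) (fun x => x ^ 2) 0 <> 0).
    { unfold comp. simpl. rewrite Rmult_0_l. unfold GG. rewrite PSeries_0. apply cc_nz; auto. }
    destruct (cont_nonzero _ _ Hpsi Hpsi0) as [dl [Hdl Hdl']].
    assert (Hlow : forall x, 0 < x -> HE_J nu q x = 0 -> dl <= x).
    { intros x Hx Hx0. destruct (Rlt_dec x dl) as [Hl|Hl]; [|lra].
      exfalso. apply (Hdl' x). rewrite Rminus_0_r, Rabs_right; lra.
      unfold comp. apply HZeq; auto. }
    intros m Hm.
    assert (Hmpos : dl <= m).
    { destruct (Rlt_dec m dl) as [Hl|Hl]; [|lra].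
      destruct (Hm (dl - m) ltac:(lra)) as [z [[Hz Hz0] Hzm]].
      pose proof (Hlow z Hz Hz0). apply Rabs_def2 in Hzm. lra. }
    split; [lra|].
    destruct (Req_dec (HE_J nu q m) 0) as [|Hne]; auto. exfalso.
    assert (Hc : continuity_pt (HE_J nu q) m).
    { apply derivable_continuous_pt. eexists. apply is_derive_Reals. apply HE_derive; auto. lra. }
    destruct (cont_nonzero _ _ Hc Hne) as [e [He He']].
    destruct (Hm e He) as [z [[Hz Hz0] Hzm]].
    exact (He' z Hzm Hz0).
Qed.
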